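(* For every $\beta\in(0,1]$, every integer $n>2$ and every integer $K$ with $1\le K\le\min\{n-1,e^{1/(5\beta)}\}$, there exists a competing content creation game $\mathcal G=(\{\mathcal S_i\}_{i=1}^n,\mathcal X,\sigma,\beta,K)$ with $n$ players such that $$PoA(\mathcal G)>\frac{n-1}{n}+\frac{1}{1+5\beta\log K}.$$
   Context: A competing content creation game $\mathcal G=(\{\mathcal S_i\}_{i=1}^n,\mathcal X,\sigma,\beta,K)$ consists of: a finite set of users $\mathcal X=\{x_1,\dots,x_m\}\subset\mathbb R^d$; players $i\in[n]$, player $i$ having an action set $\mathcal S_i\subset\mathbb R^d$; a relevance function $\sigma:\mathbb R^d\times\mathbb R^d\to[0,1]$; a noise parameter $\beta>0$; and an integer $1\le K\le n$. Let $\mathcal S=\prod_i\mathcal S_i$. For $s=(s_1,\dots,s_n)\in\mathcal S$ and user $x_j$, $\mathcal T_j(s;K)$ is the set of the first $K$ players of an ordering of $[n]$ by non-increasing $\sigma(s_i,x_j)$ (ties broken uniformly at random). Let $\varepsilon_1,\dots,\varepsilon_n$ be i.i.d. Gumbel with location $-\beta\gamma$ and scale $\beta$ (CDF $t\mapsto\exp(-e^{-(t+\beta\gamma)/\beta})$, $\gamma$ the Euler–Mascheroni constant). User $j$ chooses $i_j^*=\arg\max_{i\in\mathcal T_j(s;K)}\{\sigma(s_i,x_j)+\varepsilon_i\}$; $x_j\to s_i$ denotes the event $i_j^*=i$. User utility $\pi_j(s)=\mathbb E[\max_{i\in\mathcal T_j(s;K)}\{\sigma(s_i,x_j)+\varepsilon_i\}]$;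 player utility $u_i(s)=\sum_j\mathbb E[\sigma(s_i,x_j)+\varepsilon_i\mid x_j\to s_i]\Pr[x_j\to s_i]$; welfare $W(s)=\sum_j\pi_j(s)$. A CCE is a distribution $\alpha$ on $\mathcal S$ with $\mathbb E_{s\sim\alpha}[u_i(s)]\ge\mathbb E_{s\sim\alpha}[u_i(s_i',s_{-i})]$ for all $i$ and $s_i'\in\mathcal S_i$. $PoA(\mathcal G)=\max_{s\in\mathcal S}W(s)\big/\min_{\alpha\in CCE(\mathcal G)}\mathbb E_{s\sim\alpha}[W(s)]$. *)

(* Defs.v *)
From Stdlib Require List.
From HB Require Import structures.
From mathcomp Require Import all_boot all_order all_algebra.
From mathcomp Require Import boolp classical_sets reals.
From mathcomp Require Import sequences exp.
Set Implicit Arguments. Unset Strict Implicit. Unset Printing Implicit Defensive.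
Import Order.TTheory GRing.Theory Num.Theory.
Local Open Scope ring_scope.
Local Open Scope classical_set_scope.

Record game (R : realType) (n d : nat) := Game {
  g_acts  : 'I_n -> seq 'rV[R]_d;
  g_users : seq 'rV[R]_d;
  g_sigma : 'rV[R]_d -> 'rV[R]_d -> R;
  g_beta  : R;
  g_K     : nat }.

Definition valid_game (R : realType) (n d : nat) (G : game R n d) : Prop :=
  [/\ forall i, g_acts G i != [::],
      uniq (g_users G),
      forall a b, 0 <= g_sigma G a b <= 1,
      0 < g_beta G &
      (1 <= g_K G <= n)%N ].

Definition profile (R : realType) (n d : nat) := 'I_n -> 'rV[R]_d.

Definition in_profiles (R : realType) (n d : nat) (G : game R n d)
  (s : profile R n d) : Prop := forall i, s i \in g_acts G i.

Definition deviate (R : realType) (n d : nat) (s : profile R n d) (i : 'I_n)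
  (a : 'rV[R]_d) : profile R n d := fun k => if k == i then a else s k.

Section Utilities.
Variables (R : realType) (n d : nat) (G : game R n d).

Definition rel (s : profile R n d) (x : 'rV[R]_d) (k : 'I_n) : R :=
  g_sigma G (s k) x.

(* Pr[i \in T_x(s;K)] under uniform random tie-breaking:
   a = #players strictly more relevant, b = #players equally relevant
   (including i); then i is in the top K with probability
   clamp((K - a)/b, 0, 1). *)
Definition prob_top (s : profile R n d) (x : 'rV[R]_d) (i : 'I_n) : R :=
  let a := #|[pred k : 'I_n | rel s x i < rel s x k]| in
  let b := #|[pred k : 'I_n | rel s x k == rel s x i]| in
  Num.min 1 (Num.max 0 (((g_K G)%:R - a%:R) / b%:R)).

(* sum over the top-K set of exp(sigma/beta); deterministic, since tied
   players have equal relevance *)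
Definition Zsum (s : profile R n d) (x : 'rV[R]_d) : R :=
  \sum_(k < n) prob_top s x k * expR (rel s x k / g_beta G).

(* user utility pi_x(s) = E[max_{i in T} sigma_i + eps_i] for Gumbel noise
   with location -beta*gamma and scale beta *)
Definition user_util (s : profile R n d) (x : 'rV[R]_d) : R :=
  g_beta G * ln (Zsum s x).

(* Pr[x -> s_i] (logit choice among the top-K set) *)
Definition choice_prob (s : profile R n d) (x : 'rV[R]_d) (i : 'I_n) : R :=
  prob_top s x i * expR (rel s x i / g_beta G) / Zsum s x.

(* E[sigma_i + eps_i | x -> s_i] = E[max] for Gumbel noise, hence
   u_i(s) = sum_x Pr[x -> s_i] * pi_x(s) *)
Definition player_util (s : profile R n d) (i : 'I_n) : R :=
  \sum_(x <- g_users G) choice_prob s x i * user_util s x.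

Definition welfare (s : profile R n d) : R :=
  \sum_(x <- g_users G) user_util s x.

Definition dist := seq (R * profile R n d).

Definition expect (al : dist) (f : profile R n d -> R) : R :=
  \sum_(p <- al) p.1 * f p.2.

Definition is_dist (al : dist) : Prop :=
  (forall p, List.In p al -> 0 <= p.1 /\ in_profiles G p.2) /\
  \sum_(p <- al) p.1 = 1.

Definition is_CCE (al : dist) : Prop :=
  is_dist al /\
  forall (i : 'I_n) (a : 'rV[R]_d), a \in g_acts G i ->
    expect al (fun s => player_util (deviate s i a) i)
      <= expect al (fun s => player_util s i).

(* PoA = max_s W(s) / min_{alpha CCE} E_alpha[W]  (max / min are attained in
   finite games, so sup / inf coincide with them) *)
Definition PoA : R :=
  sup [set welfare s | s in in_profiles G] /
  inf [set expect al welfare | al in is_CCE].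

End Utilities.

(* Main.v *)
Require Import Defs.
From HB Require Import structures.
From mathcomp Require Import all_boot all_order all_algebra.
From mathcomp Require Import boolp classical_sets reals.
From mathcomp Require Import sequences exp.
From mathcomp Require Import ring lra.
Import Order.TTheory GRing.Theory Num.Theory.
Local Open Scope ring_scope.

Section Gen.
Variables (R : realType) (n d : nat) (G : game R n d).
Hypothesis hb : 0 < g_beta G.
Hypothesis hK : (1 <= g_K G <= n)%N.
Hypothesis hs : forall a b, 0 <= g_sigma G a b <= 1.

Lemma prob_top_ge0 s x k : 0 <= prob_top G s x k.
Proof. by rewrite /prob_top le_min ler01 le_max lexx. Qed.

Lemma prob_top_le1 s x k : prob_top G s x k <= 1.
Proof. by rewrite /prob_top ge_min lexx. Qed.

Lemma term_ge0 s x k : 0 <= prob_top G s x k * expR (Defs.rel G s x k / g_beta G).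
Proof. by rewrite mulr_ge0 ?prob_top_ge0 // ltW // expR_gt0. Qed.

Lemma Zsum_ge_term s x i :
  prob_top G s x i * expR (Defs.rel G s x i / g_beta G) <= Zsum G s x.
Proof.
rewrite /Zsum (bigD1 i) //= lerDl; apply: sumr_ge0 => k _; exact: term_ge0.
Qed.

Lemma Zsum_ge_max s x k0 : expR (Defs.rel G s x k0 / g_beta G) <= Zsum G s x.
Proof.
have [k1 _ Hk1] := @Order.TotalTheory.arg_maxP _ _ 'I_n k0 predT (Defs.rel G s x) isT.
set M := Defs.rel G s x k1.
set T := [pred k : 'I_n | Defs.rel G s x k == M].
have HT : forall k, k \in T -> prob_top G s x k = Num.min 1 (Num.max 0 ((g_K G)%:R / #|T|%:R)).
  move=> k /eqP kT; rewrite /prob_top kT.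
  have -> : #|[pred j : 'I_n | M < Defs.rel G s x j]| = 0%N.
    apply/eqP; rewrite -leqn0 leqNgt; apply/negP => /card_gt0P [j].
    have := Hk1 j isT; rewrite inE ltNge /= => -> //.
  by rewrite (_ : (0%N)%:R = 0 :> R) // subr0.
have cT : (0 < #|T|)%N by apply/card_gt0P; exists k1; rewrite inE.
apply: (@le_trans _ _ (\sum_(k < n | k \in T) prob_top G s x k * expR (Defs.rel G s x k / g_beta G))).
  rewrite (eq_bigr (fun _ => Num.min 1 (Num.max 0 ((g_K G)%:R / #|T|%:R)) * expR (M / g_beta G))); last first.
    by move=> k kT; rewrite HT //; move: kT; rewrite inE => /eqP ->.
  rewrite sumr_const.
  apply: (@le_trans _ _ (expR (M / g_beta G))).
    rewrite ler_expR ler_pM2r ?invr_gt0 //; exact: (Hk1 k0 isT).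
  rewrite -mulrnAl ler_peMl ?expR_ge0 // -[X in _ <= X]mulr_natl.
  have Tpos : (0 : R) < #|T|%:R by rewrite ltr0n.
  have K1 : (1 : R) <= (g_K G)%:R by rewrite ler1n; case/andP: hK.
  rewrite /=. set c := #|T|%:R; set k := (g_K G)%:R.
  have -> : Num.max 0 (k / c) = k / c by apply/max_idPr; rewrite divr_ge0 // ltW // (lt_le_trans ltr01).
  have [h|h] := leP 1 (k / c).
    by rewrite mulr1 ler1n.
  by rewrite mulrC divfK ?gt_eqF.
rewrite [X in _ <= X](bigID (fun k => k \in T)) /= lerDl; apply: sumr_ge0 => k _; exact: term_ge0.
Qed.

Lemma Zsum_gt0 s x (k0 : 'I_n) : 0 < Zsum G s x.
Proof. exact: (lt_le_trans (expR_gt0 _) (Zsum_ge_max s x k0)). Qed.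

Lemma user_util_ge s x k0 : Defs.rel G s x k0 <= user_util G s x.
Proof.
rewrite /user_util -ler_pdivrMl //.
rewrite -[X in X <= _]expRK ler_ln ?posrE ?expR_gt0 ?(Zsum_gt0 s x k0) //.
by rewrite mulrC; exact: Zsum_ge_max.
Qed.

Lemma choice_ge0 s x i : 0 <= choice_prob G s x i.
Proof.
rewrite /choice_prob divr_ge0 ?term_ge0 //; exact: ltW (Zsum_gt0 s x i).
Qed.

Lemma choice_le1 s x i : choice_prob G s x i <= 1.
Proof.
rewrite /choice_prob ler_pdivrMr ?(Zsum_gt0 s x i) // mul1r; exact: Zsum_ge_term.
Qed.

Lemma Zsum_le s x : Zsum G s x <= n%:R * expR (1 / g_beta G).
Proof.
rewrite /Zsum.
apply: (@le_trans _ _ (\sum_(k < n) expR (1 / g_beta G))); last first.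
  by rewrite sumr_const card_ord mulr_natl.
apply: ler_sum => k _.
rewrite -[X in _ <= X]mul1r ler_pM ?prob_top_ge0 ?expR_ge0 ?prob_top_le1 //.
rewrite ler_expR ler_pM2r ?invr_gt0 //; by case/andP: (hs (s k) x).
Qed.

Section Tie.
Variables (s : profile R n d) (x : 'rV[R]_d) (r : R).
Hypothesis Hr : forall k, Defs.rel G s x k = r.

Lemma tie_prob k : prob_top G s x k = (g_K G)%:R / n%:R.
Proof.
have n0 : (0 < n)%N by case/andP: hK => h1 h2; exact: leq_trans h1 h2.
rewrite /prob_top.
have -> : #|[pred j : 'I_n | Defs.rel G s x k < Defs.rel G s x j]| = 0%N.
  by apply: eq_card0 => j; rewrite inE !Hr ltxx.
have -> : #|[pred j : 'I_n | Defs.rel G s x j == Defs.rel G s x k]| = n.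
  by rewrite -[RHS]card_ord; apply: eq_card => j; rewrite !inE !Hr eqxx.
rewrite (_ : (0%N)%:R = 0 :> R) // subr0.
have h0 : 0 <= (g_K G)%:R / n%:R :> R by rewrite divr_ge0.
have h1 : (g_K G)%:R / n%:R <= 1 :> R.
  by rewrite ler_pdivrMr ?ltr0n // mul1r ler_nat; case/andP: hK.
by rewrite (max_idPr h0) (min_idPr h1).
Qed.

Lemma tie_Zsum : Zsum G s x = (g_K G)%:R * expR (r / g_beta G).
Proof.
have n0 : (0 < n)%N by case/andP: hK => h1 h2; exact: leq_trans h1 h2.
rewrite /Zsum (eq_bigr (fun _ => (g_K G)%:R / n%:R * expR (r / g_beta G))); last first.
  by move=> k _; rewrite tie_prob Hr.
rewrite sumr_const card_ord -(mulr_natl ((g_K G)%:R / n%:R * expR (r / g_beta G)) n).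
have nn0 : n%:R != 0 :> R by rewrite pnatr_eq0 -lt0n.
by field.
Qed.

Lemma tie_util : user_util G s x = g_beta G * ln (g_K G)%:R + r.
Proof.
have K0 : (0 < g_K G)%N by case/andP: hK.
rewrite /user_util tie_Zsum lnM ?posrE ?expR_gt0 ?ltr0n // expRK mulrDr.
by rewrite mulrCA divff ?mulr1 // gt_eqF.
Qed.

Lemma tie_choice k : choice_prob G s x k = n%:R^-1.
Proof.
have K0 : (0 < g_K G)%N by case/andP: hK.
have n0 : (0 < n)%N by case/andP: hK => h1 h2; exact: leq_trans h1 h2.
rewrite /choice_prob tie_Zsum tie_prob Hr.
have e0 : expR (r / g_beta G) != 0 by rewrite gt_eqF ?expR_gt0.
have k0 : (g_K G)%:R != 0 :> R by rewrite pnatr_eq0 -lt0n.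
have nn0 : n%:R != 0 :> R by rewrite pnatr_eq0 -lt0n.
by field; rewrite k0 e0 nn0.
Qed.
End Tie.

Lemma zero_choice s x i :
  (g_K G <= #|[pred k : 'I_n | (Defs.rel G s x i < Defs.rel G s x k)%R]|)%N ->
  choice_prob G s x i = 0.
Proof.
move=> h; rewrite /choice_prob /prob_top.
set a := #|_|; set b := #|_|.
have h1 : ((g_K G)%:R - a%:R) / b%:R <= 0 :> R.
  by rewrite mulr_le0_ge0 ?invr_ge0 // subr_le0 ler_nat.
by rewrite (max_idPl h1) (min_idPr ler01) !mul0r.
Qed.

Lemma uniq_Zsum s x i : (1 < n)%N ->
  Defs.rel G s x i = 1 -> (forall k, k != i -> Defs.rel G s x k = 0) ->
  Zsum G s x <= (g_K G)%:R * expR (1 / g_beta G).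
Proof.
move=> n1 hi hk.
have K1 : (1 <= g_K G)%N by case/andP: hK.
set e := expR (1 / g_beta G).
have e1 : 1 <= e by rewrite /e -[X in X <= _]expR0 ler_expR divr_ge0 // ltW.
set q := ((g_K G)%:R - 1) / (n.-1)%:R : R.
have hq : forall k, k != i -> prob_top G s x k <= q.
  move=> k ki; rewrite /prob_top.
  set a := #|_|; set b := #|_|.
  have a1 : (1 <= a)%N.
    by apply/card_gt0P; exists i; rewrite inE hk // hi ltr01.
  have b1 : (n.-1 <= b)%N.
    rewrite -(card_ord n) -(cardC1 i) /b; apply: subset_leq_card; apply/fintype.subsetP => j.
    by rewrite !inE => ji; rewrite hk // hk.
  have n10 : (0 : R) < (n.-1)%:R by rewrite ltr0n -ltnS prednK // ltnW.
  have q0 : 0 <= q by rewrite divr_ge0 // subr_ge0 ler1n.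
  set y := ((g_K G)%:R - a%:R) / b%:R.
  have b0 : (0 : R) < b%:R by rewrite (lt_le_trans n10) // ler_nat.
  have hy : y <= q.
    apply: (@le_trans _ _ (((g_K G)%:R - 1) / b%:R)).
      by rewrite ler_wpM2r ?invr_ge0 // lerD2l lerN2 ler1n.
    by rewrite ler_wpM2l ?subr_ge0 ?ler1n // lef_pV2 ?posrE // ler_nat.
  have hm : Num.max 0 y <= q by rewrite ge_max q0 hy.
  by rewrite ge_min hm orbT.
rewrite /Zsum (bigD1 i) //=.
apply: (@le_trans _ _ (e + \sum_(k < n | k != i) q)).
  apply: lerD.
    by rewrite hi -[X in _ <= X]mul1r ler_wpM2r ?expR_ge0 ?prob_top_le1.
  apply: ler_sum => k ki; rewrite (hk k ki) mul0r expR0 mulr1; exact: hq.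
rewrite sumr_const.
have -> : #|[pred k : 'I_n | k != i]| = n.-1.
  by have := cardC1 i; rewrite card_ord => <-; apply: eq_card => j; rewrite !inE.
have n10 : (n.-1)%:R != 0 :> R by rewrite pnatr_eq0 -lt0n -ltnS prednK // ltnW.
have -> : q *+ n.-1 = (g_K G)%:R - 1 by rewrite -(mulr_natl q n.-1) /q; field.
have K1r : 1 <= (g_K G)%:R :> R by rewrite ler1n.
nra.
Qed.

End Gen.

Section Con.
Variables (R : realType) (n K : nat) (beta : R).

Definition pt (k : nat) : 'rV[R]_1 := const_mx (k%:R).
Definition eps : R := (n.+1)%:R^-1.
Definition sig (a x : 'rV[R]_1) : R :=
  if x 0 0 < n%:R then (if a 0 0 == 0 then 1 else 1 - eps)
  else (if a 0 0 == x 0 0 - n%:R + 1 then 1 else 0).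
Definition acts (i : 'I_n) : seq 'rV[R]_1 := [:: pt 0; pt i.+1].
Definition users : seq 'rV[R]_1 := map pt (iota 0 (n + n)).
Definition GG : game R n 1 := Game acts users sig beta K.

Lemma pt00 k : (pt k) 0 0 = k%:R. Proof. by rewrite /pt mxE. Qed.

Lemma eps_ge0 : 0 <= eps. Proof. by rewrite /eps invr_ge0. Qed.
Lemma eps_le1 : eps <= 1.
Proof. by rewrite /eps invf_le1 ?ler1n ?ltr0n. Qed.

Lemma sig_range a x : 0 <= sig a x <= 1.
Proof.
have := eps_ge0; have := eps_le1 => e1 e0.
rewrite /sig; case: ifP => _; case: ifP => _; rewrite ?ler01 ?lexx //.
by rewrite subr_ge0 e1 lerBlDr lerDl e0.
Qed.

Lemma sig_hub a j : (j < n)%N -> 1 - eps <= sig a (pt j).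
Proof.
move=> jn; rewrite /sig pt00 ltr_nat jn; case: ifP => _ //.
by rewrite lerBlDr lerDl eps_ge0.
Qed.

Lemma sig_H_hub j : (j < n)%N -> sig (pt 0) (pt j) = 1.
Proof. by move=> jn; rewrite /sig !pt00 ltr_nat jn eqxx. Qed.

Lemma sig_A_hub i j : (j < n)%N -> sig (pt i.+1) (pt j) = 1 - eps.
Proof. by move=> jn; rewrite /sig !pt00 ltr_nat jn pnatr_eq0. Qed.

Lemma privE j : (n + j)%:R - n%:R + 1 = (j.+1)%:R :> R.
Proof. by rewrite natrD -addn1 natrD; ring. Qed.

Lemma sig_H_priv j : sig (pt 0) (pt (n + j)) = 0.
Proof.
rewrite /sig !pt00 ltr_nat ltnNge leq_addr /= privE.
by rewrite eq_sym pnatr_eq0.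
Qed.

Lemma sig_A_priv i j : sig (pt i.+1) (pt (n + j)) = if i == j then 1 else 0.
Proof.
by rewrite /sig !pt00 ltr_nat ltnNge leq_addr /= privE eqr_nat eqSS.
Qed.

Lemma sum_users (f : 'rV[R]_1 -> R) :
  \sum_(x <- users) f x = \sum_(j < n) f (pt j) + \sum_(j < n) f (pt (n + j)).
Proof.
rewrite /users big_map iotaD big_cat /=; congr (_ + _).
  by rewrite -(subn0 n) -/(index_iota 0 n) big_mkord subn0.
rewrite add0n -[X in iota X _]addn0 iotaDl big_map.
by rewrite -(subn0 n) -/(index_iota 0 n) big_mkord subn0.
Qed.

End Con.

Lemma ineq (R : realType) (c N : R) : 0 <= c -> c <= 1/5 -> 3 <= N ->
  (N - 1) / N + 1 / (1 + 5 * c) < (c + (1 - (N + 1)^-1) + 1) / (2 * c + 1).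
Proof.
move=> c0 c5 N3.
have N0 : N != 0 by rewrite gt_eqF //; lra.
have N10 : N + 1 != 0 by rewrite gt_eqF //; lra.
have c10 : 2 * c + 1 != 0 by rewrite gt_eqF //; lra.
have c50 : 1 + 5 * c != 0 by rewrite gt_eqF //; lra.
rewrite -subr_gt0.
have -> : (c + (1 - (N + 1)^-1) + 1) / (2 * c + 1) - ((N - 1) / N + 1 / (1 + 5 * c))
  = c * (2 - 5 * c) / ((2 * c + 1) * (1 + 5 * c)) + (2 * c * N + 2 * c + 1) / ((N + 1) * N * (2 * c + 1)).
  by field; rewrite N0 N10 c10 c50.
apply: ltr_wpDl.
  apply: divr_ge0; first by apply: mulr_ge0 => //; lra.
  by apply: mulr_ge0; lra.
apply: divr_gt0; first by nra.
by apply: mulr_gt0; [apply: mulr_gt0|]; lra.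
Qed.

Arguments Zsum_gt0 {R n d G}. Arguments user_util_ge {R n d G}. Arguments choice_ge0 {R n d G}.
Arguments choice_le1 {R n d G}. Arguments Zsum_le {R n d G}. Arguments tie_util {R n d G}.
Arguments tie_choice {R n d G}. Arguments zero_choice {R n d G}. Arguments uniq_Zsum {R n d G}.
Arguments Zsum_ge_max {R n d G}.

Section Prf.
Variables (R : realType) (n K : nat) (beta : R).
Hypotheses (hb : 0 < beta) (hK1 : (1 <= K)%N) (hKn : (K <= n.-1)%N) (hn : (2 < n)%N).

Local Notation G := (GG R n K beta).
Local Notation pt := (pt R).

Lemma hK : (1 <= g_K G <= n)%N.
Proof. by rewrite /= hK1 (leq_trans hKn) // leq_pred. Qed.
Lemma hbG : 0 < g_beta G. Proof. exact: hb. Qed.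
Lemma hs : forall a b, 0 <= g_sigma G a b <= 1.
Proof. exact: sig_range. Qed.

Definition c := beta * ln (K%:R : R).
Definition eqp : profile R n 1 := fun _ => pt 0.
Definition optp : profile R n 1 := fun i => pt i.+1.
Definition devp (i : 'I_n) : profile R n 1 := deviate eqp i (pt i.+1).

Lemma n0 : (0 < n)%N. Proof. exact: leq_trans _ hn. Qed.
Lemma nR0 : n%:R != 0 :> R. Proof. by rewrite pnatr_eq0 -lt0n n0. Qed.

Lemma W_eq : welfare G eqp = (c + 1) *+ n + c *+ n.
Proof.
rewrite /welfare sum_users; congr (_ + _).
  rewrite (eq_bigr (fun _ => c + 1)) ?sumr_const ?card_ord // => j _.
  by rewrite (@tie_util _ _ _ G hbG hK _ _ (1)) // => k; rewrite /Defs.rel /= sig_H_hub.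
rewrite (eq_bigr (fun _ => c)) ?sumr_const ?card_ord // => j _.
by rewrite (@tie_util _ _ _ G hbG hK _ _ (0)) ?addr0 // => k; rewrite /Defs.rel /= sig_H_priv.
Qed.

Lemma u_eq i : player_util G eqp i = (c + 1) + c.
Proof.
rewrite /player_util sum_users; congr (_ + _).
  rewrite (eq_bigr (fun _ => n%:R^-1 * (c + 1))) ?sumr_const ?card_ord; last first.
    move=> j _; have Hr : forall k, Defs.rel G eqp (pt j) k = 1.
      by move=> k; rewrite /Defs.rel /= sig_H_hub.
    by rewrite (tie_util hbG hK _ _ _ Hr) (tie_choice hK _ _ _ Hr).
  rewrite -(mulr_natl (n%:R^-1 * (c + 1)) n) mulrA mulfV ?mul1r //; exact: nR0.
rewrite (eq_bigr (fun _ => n%:R^-1 * c)) ?sumr_const ?card_ord; last first.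
  move=> j _; have Hr : forall k, Defs.rel G eqp (pt (n + j)) k = 0.
    by move=> k; rewrite /Defs.rel /= sig_H_priv.
  by rewrite (tie_util hbG hK _ _ _ Hr) (tie_choice hK _ _ _ Hr) addr0.
rewrite -(mulr_natl (n%:R^-1 * c) n) mulrA mulfV ?mul1r //; exact: nR0.
Qed.

Lemma W_opt : (c + (1 - eps R n)) *+ n + 1 *+ n <= welfare G optp.
Proof.
rewrite /welfare sum_users; apply: lerD.
  rewrite (eq_bigr (fun _ => c + (1 - eps R n))) ?sumr_const ?card_ord // => j _.
  by rewrite (@tie_util _ _ _ G hbG hK _ _ (1 - eps R n)) // => k; rewrite /Defs.rel /= sig_A_hub.
have -> : 1 *+ n = \sum_(j < n) (1 : R) by rewrite sumr_const card_ord.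
apply: ler_sum => j _.
apply: le_trans (user_util_ge hbG hK _ _ j).
by rewrite /Defs.rel /= sig_A_priv eqxx.
Qed.

Lemma W_low s : (1 - eps R n) *+ n <= welfare G s.
Proof.
pose k0 : 'I_n := Ordinal n0.
rewrite /welfare sum_users -[X in X <= _]addr0; apply: lerD.
  have -> : (1 - eps R n) *+ n = \sum_(j < n) (1 - eps R n : R) by rewrite sumr_const card_ord.
  apply: ler_sum => j _; apply: le_trans (user_util_ge hbG hK _ _ k0).
  exact: sig_hub.
apply: sumr_ge0 => j _; apply: le_trans (user_util_ge hbG hK _ _ k0).
by case/andP: (sig_range R n (s k0) (pt (n + j))).
Qed.

Lemma W_up s : welfare G s <= \sum_(x <- users R n) (beta * ln (n%:R * expR (1 / beta))).
Proof.
pose k0 : 'I_n := Ordinal n0.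
apply: ler_sum => x _; rewrite /user_util; apply: ler_wpM2l; first exact: ltW.
rewrite ler_ln ?posrE ?(Zsum_gt0 hbG hK _ _ k0) ?mulr_gt0 ?expR_gt0 ?ltr0n ?n0 //.
exact: (Zsum_le hbG hs).
Qed.

Lemma rel_dev i x k : Defs.rel G (devp i) x k =
  if k == i then sig R n (pt i.+1) x else sig R n (pt 0) x.
Proof. by rewrite /Defs.rel /devp /deviate /=; case: ifP. Qed.

Lemma c_ge0 : 0 <= c.
Proof. by apply: mulr_ge0; [exact: ltW | apply: ln_ge0; rewrite ler1n]. Qed.

Lemma eps_gt0 : 0 < eps R n. Proof. by rewrite /eps invr_gt0 ltr0n. Qed.

Lemma u_dev i : player_util G (devp i) i <= (c + 1) + c.
Proof.
rewrite /player_util sum_users.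
have hub0 : \sum_(j < n) choice_prob G (devp i) (pt j) i * user_util G (devp i) (pt j) = 0.
  apply: big1 => j _; rewrite (zero_choice (devp i) (pt j) i) ?mul0r //.
  apply: leq_trans hKn _.
  have := cardC1 i; rewrite card_ord => <-.
  apply: subset_leq_card; apply/fintype.subsetP => k; rewrite !inE => ki.
  rewrite !rel_dev eqxx (negbTE ki) sig_A_hub // sig_H_hub //.
  by rewrite ltrBlDr ltrDl eps_gt0.
rewrite hub0 add0r (bigD1 i) //=.
have H1 : Defs.rel G (devp i) (pt (n + i)) i = 1 by rewrite rel_dev eqxx sig_A_priv eqxx.
have H0 : forall k, k != i -> Defs.rel G (devp i) (pt (n + i)) k = 0.
  by move=> k ki; rewrite rel_dev (negbTE ki) sig_H_priv.
have u0 : 0 <= user_util G (devp i) (pt (n + i)).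
  by apply: le_trans (user_util_ge hbG hK _ _ i); rewrite H1 ler01.
have u1 : user_util G (devp i) (pt (n + i)) <= c + 1.
  have Z := uniq_Zsum hbG hK (devp i) (pt (n + i)) i (ltnW hn) H1 H0.
  apply: (@le_trans _ _ (beta * ln (K%:R * expR (1 / beta)))).
    rewrite /user_util; apply: ler_wpM2l; first exact: ltW.
    by rewrite ler_ln ?posrE ?(Zsum_gt0 hbG hK _ _ i) ?mulr_gt0 ?expR_gt0 ?ltr0n.
  rewrite lnM ?posrE ?expR_gt0 ?ltr0n // expRK mulrDr /c mul1r mulfV //.
  by rewrite gt_eqF.
have ti : choice_prob G (devp i) (pt (n + i)) i * user_util G (devp i) (pt (n + i)) <= c + 1.
  exact: le_trans (ler_piMl u0 (choice_le1 hbG hK _ _ _)) u1.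
have rest : \sum_(j < n | j != i) choice_prob G (devp i) (pt (n + j)) i * user_util G (devp i) (pt (n + j))
   = \sum_(j < n | j != i) n%:R^-1 * c.
  apply: eq_bigr => j ji.
  have ij : (i == j :> nat) = false by apply/negbTE; rewrite eq_sym; exact: ji.
  have Hr : forall k, Defs.rel G (devp i) (pt (n + j)) k = 0.
    by move=> k; rewrite rel_dev; case: ifP => [_|_]; [rewrite sig_A_priv ij | rewrite sig_H_priv].
  by rewrite (tie_util hbG hK _ _ _ Hr) (tie_choice hK _ _ _ Hr) addr0.
have all : \sum_(j < n) n%:R^-1 * c = c.
  rewrite sumr_const card_ord -(mulr_natl (n%:R^-1 * c) n) mulrA mulfV ?mul1r //; exact: nR0.
rewrite (bigD1 i) //= in all.
have ge : 0 <= n%:R^-1 * c by rewrite mulr_ge0 ?c_ge0 // invr_ge0.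
rewrite rest.
lra.
Qed.

Definition al : dist R n 1 := [:: (1, eqp)].

Lemma CCE : is_CCE G al.
Proof.
split.
  split; last by rewrite big_cons big_nil addr0.
  move=> p [<-|[]] /=; split; first exact: ler01.
  by move=> i; rewrite /eqp /= inE eqxx.
move=> i a; rewrite /= !inE => /orP [/eqP ->|/eqP ->]; rewrite /expect !big_cons !big_nil /=.
  have -> : deviate eqp i (pt 0) = eqp.
    by apply: funext => k; rewrite /deviate; case: ifP.
  done.
have := u_dev i; rewrite u_eq /devp => h.
by rewrite !mul1r !addr0.
Qed.

Lemma exp_low (al' : dist R n 1) :
  (forall p, List.In p al' -> 0 <= p.1 /\ in_profiles G p.2) ->
  \sum_(p <- al') p.1 = 1 -> (1 - eps R n) *+ n <= expect al' (welfare G).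
Proof.
move=> hp hs1.
have key : \sum_(p <- al') p.1 * ((1 - eps R n) *+ n) <= expect al' (welfare G).
  rewrite /expect; elim: al' hp {hs1} => [|q r IH] hp; first by rewrite !big_nil.
  rewrite !big_cons; apply: lerD.
    apply: ler_wpM2l; first by case: (hp q (or_introl erefl)).
    exact: W_low.
  by apply: IH => p rp; apply: hp; right.
by move: key; rewrite -mulr_suml hs1 mul1r.
Qed.

Lemma valid : valid_game G.
Proof.
split => //.
- rewrite /= /users map_inj_uniq ?iota_uniq // => a b.
  move/(congr1 (fun m : 'rV[R]_1 => m 0 0)); rewrite !pt00 => /eqP.
  by rewrite eqr_nat => /eqP.
- exact: hs.
- exact: hK.
Qed.

Lemma main_ineq (hexp : (K%:R : R) <= expR (1 / (5 * beta))) :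
  (n.-1)%:R / n%:R + 1 / (1 + 5 * beta * ln (K%:R : R)) < PoA G.
Proof.
have c5 : c <= 1/5.
  have : ln (K%:R : R) <= 1 / (5 * beta).
    by rewrite -[X in _ <= X]expRK ler_ln ?posrE ?expR_gt0 ?ltr0n.
  rewrite /c => h; apply: (@le_trans _ _ (beta * (1 / (5 * beta)))).
    by apply: ler_wpM2l => //; exact: ltW.
  by rewrite le_eqVlt; apply/orP; left; apply/eqP; field; rewrite gt_eqF.
set S1 := [set welfare G s | s in in_profiles G]%classic.
set S2 := [set expect al' (welfare G) | al' in is_CCE G]%classic.
have supge : welfare G optp <= sup S1.
  apply: ub_le_sup.
    exists (\sum_(x <- users R n) (beta * ln (n%:R * expR (1 / beta)))).
    by move=> y [s _ <-]; exact: W_up.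
  by exists optp => //; move=> i; rewrite /optp /= !inE eqxx orbT.
have delta0 : 0 < (1 - eps R n) *+ n.
  by rewrite pmulrn_lgt0 ?n0 // subr_gt0 /eps invf_lt1 ?ltr0n // ltr1n ltnS n0.
have infge : (1 - eps R n) *+ n <= inf S2.
  apply: lb_le_inf; first by exists (expect al (welfare G)), al => //; exact: CCE.
  by move=> y [al' [[hp hs1] _] <-]; exact: exp_low.
have infle : inf S2 <= welfare G eqp.
  have : inf S2 <= expect al (welfare G).
    apply: ge_inf; last by exists al => //; exact: CCE.
    exists ((1 - eps R n) *+ n).
    by move=> y [al' [[hp hs1] _] <-]; exact: exp_low.
  by rewrite /expect big_cons big_nil mul1r addr0.
have I0 : 0 < inf S2 by exact: lt_le_trans delta0 infge.
have We0 : 0 < welfare G eqp by exact: lt_le_trans I0 infle.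
have Wo0 : 0 <= welfare G optp.
  by apply: le_trans (ltW delta0) (W_low optp).
rewrite /PoA -/S1 -/S2.
apply: (@lt_le_trans _ _ (welfare G optp / welfare G eqp)); last first.
  apply: (@le_trans _ _ (welfare G optp / inf S2)).
    by apply: ler_wpM2l => //; rewrite lef_pV2 ?posrE.
  by apply: ler_wpM2r => //; rewrite invr_ge0 ltW.
apply: (@lt_le_trans _ _ (((c + (1 - eps R n)) *+ n + 1 *+ n) / welfare G eqp)); last first.
  by apply: ler_wpM2r; [rewrite invr_ge0 ltW | exact: W_opt].
rewrite W_eq.
have N3 : (3 : R) <= n%:R by rewrite (ler_nat R 3 n).
have := @ineq R c n%:R c_ge0 c5 N3.
have -> : (n.-1)%:R = n%:R - 1 :> R by rewrite -subn1 natrB // n0.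
have -> : eps R n = (n%:R + 1)^-1 by rewrite /eps -addn1 natrD.
rewrite mulrA -/c.
have -> : (c + (1 - (n%:R + 1)^-1)) *+ n + 1 *+ n = (c + (1 - (n%:R + 1)^-1) + 1) * n%:R.
  by rewrite -mulrnDl mulr_natr; congr (_ *+ _); ring.
have -> : (c + 1) *+ n + c *+ n = (2 * c + 1) * n%:R.
  by rewrite -mulrnDl mulr_natr; congr (_ *+ _); ring.
have nn : n%:R != 0 :> R by exact: nR0.
by rewrite -mulf_div divff // mulr1.
Qed.

End Prf.

Theorem theorem2 (R : realType) (beta : R) (n K : nat) :
  0 < beta <= 1 -> (2 < n)%N -> (1 <= K)%N -> (K <= n.-1)%N ->
  (K%:R : R) <= expR (1 / (5 * beta)) ->
  exists (d : nat) (G : game R n d),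
    [/\ valid_game G, g_beta G = beta, g_K G = K &
        (n.-1)%:R / n%:R + 1 / (1 + 5 * beta * ln (K%:R : R)) < PoA G].
Proof.
move=> /andP[hb _] hn hK1 hKn hexp.
exists 1%N, (GG R n K beta); split => //.
  exact: valid.
exact: main_ineq.
Qed.
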